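(* Let $G$ be the graph on the $16$ vertices $u_i,b_i,o_i,r_i$ ($0\le i\le 3$) whose edge set is the union of the edge sets of the following eight complete graphs $K_4$: the complete graph on $\{u_0,u_1,u_2,u_3\}$; for each $i\in\{0,1,2,3\}$, the complete graph on $\{u_i,b_i,o_i,r_i\}$; the complete graph on $\{b_0,b_1,b_2,b_3\}$; the complete graph on $\{o_0,o_1,o_2,o_3\}$; and the complete graph on $\{r_0,r_1,r_2,r_3\}$. Then $G$ contains no copy of $\widehat P_4$ and $G$ has exactly $32=\lfloor 16^2/8\rfloor$ triangles; in particular $G$ is an extremal graph for $\mathrm{ex}(16,K_3,\widehat P_4)$ that contains a $K_4$.
   Context: All graphs are finite and simple. $P_4$ denotes the path on $4$ vertices. For a graph $G$, its suspension $\widehat G$ is the graph obtained from $G$ by adding one new vertex and joining it to every vertex of $G$. ''Contains a copy of $H$'' means contains a subgraph (not necessarily induced) isomorphic to $H$. $\mathrm{ex}(n,K_3,H)$ denotes the maximum number of triangles in an $n$-vertex graph containing no copy of $H$. *)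

(* Defs.v *)
From mathcomp Require Import all_boot.
Set Implicit Arguments. Unset Strict Implicit. Unset Printing Implicit Defensive.

(* A finite simple graph is a finType of vertices with an edge relation
   (all relations used below are symmetric and irreflexive). *)

Definition contains_copy (T U : finType) (eG : rel T) (eH : rel U) : Prop :=
  exists f : U -> T, injective f /\ forall x y, eH x y -> eG (f x) (f y).

Definition path_graph (n : nat) : rel 'I_n :=
  fun x y => (x.+1 == y :> nat) || (y.+1 == x :> nat).

Definition complete_graph (n : nat) : rel 'I_n := fun x y => x != y.

Definition suspension (n : nat) (e : rel 'I_n) : rel 'I_n.+1 :=
  fun x y =>
    match unlift ord_max x, unlift ord_max y with
    | Some a, Some b => e a b
    | Some _, None | None, Some _ => true
    | None, None => false
    end.

Definition triangles (T : finType) (e : rel T) : nat :=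
  #|[set S : {set T} | (#|S| == 3) &&
       [forall x in S, forall y in S, (x != y) ==> e x y]]|.

(* The 16-vertex graph: vertex (c, i) with c : 'I_4 the letter
   (0 = u, 1 = b, 2 = o, 3 = r) and i : 'I_4 the index. *)
Notation V16 := ('I_4 * 'I_4)%type.
Definition vu (i : 'I_4) : V16 := (inord 0, i).
Definition vb (i : 'I_4) : V16 := (inord 1, i).
Definition vo (i : 'I_4) : V16 := (inord 2, i).
Definition vr (i : 'I_4) : V16 := (inord 3, i).

Definition cliques16 : seq {set V16} :=
  [:: [set vu i | i : 'I_4];
      [set vu (inord 0); vb (inord 0); vo (inord 0); vr (inord 0)];
      [set vu (inord 1); vb (inord 1); vo (inord 1); vr (inord 1)];
      [set vu (inord 2); vb (inord 2); vo (inord 2); vr (inord 2)];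
      [set vu (inord 3); vb (inord 3); vo (inord 3); vr (inord 3)];
      [set vb i | i : 'I_4];
      [set vo i | i : 'I_4];
      [set vr i | i : 'I_4]].

Definition G16 : rel V16 :=
  fun x y => (x != y) && has (fun K : {set V16} => (x \in K) && (y \in K)) cliques16.

Arguments path_graph n : clear implicits.
Arguments complete_graph n : clear implicits.

(* Main.v *)
Require Import Defs.
From mathcomp Require Import all_boot.
From Stdlib Require Import FunctionalExtensionality.
Definition G' : rel V16 := fun x y => (x != y) && ((x.1 == y.1) || (x.2 == y.2)).

Lemma mem_row (c : 'I_4) (x : V16) : (x \in [set (c, i) | i : 'I_4]) = (x.1 == c).
Proof.
apply/imsetP/eqP => [[i _ ->] //|e]; exists x.2 => //; by case: x e => /= ? ? ->.
Qed.

Lemma inord4 (k : nat) (hk : k < 4) : (inord k : 'I_4) = Ordinal hk.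
Proof. by apply: val_inj; rewrite /= inordK. Qed.

Lemma G16E x y : G16 x y = G' x y.
Proof.
rewrite /G16 /cliques16 /= /vu /vb /vo /vr !mem_row !inE.
rewrite !(@inord4 0 isT) !(@inord4 1 isT) !(@inord4 2 isT) !(@inord4 3 isT).
rewrite /G'.
case: x => [[[|[|[|[|m]]]] pc] [[|[|[|[|n]]]] pi]] //;
case: y => [[[|[|[|[|m']]]] pc'] [[|[|[|[|n']]]] pi']] //.
Qed.
Lemma adj3 (w a b : V16) : G' w a -> G' w b -> G' a b -> (a.1 == w.1) = (b.1 == w.1).
Proof.
case: w a b => w1 w2 [a1 a2] [b1 b2]; rewrite /G' /= !xpair_eqE.
case: (eqVneq a1 w1) => [e1|h1]; case: (eqVneq b1 w1) => [e2|h2] //; subst.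
- rewrite /= andbT => nwa /eqP wb; rewrite (eq_sym w1) (negbTE h2) /= => /eqP ab.
  by rewrite wb ab eqxx in nwa.
- rewrite /= andbT => /eqP wa nwb; rewrite (negbTE h1) /= => /eqP ab.
  by rewrite wa ab eqxx in nwb.
Qed.
Lemma adj3' (w a b : V16) : G' w a -> G' w b -> G' a b -> (a.2 == w.2) = (b.2 == w.2).
Proof.
have sw : forall x y : V16, G' x y = G' (x.2, x.1) (y.2, y.1).
  case=> ? ? [? ?]; rewrite /G' /= !xpair_eqE; congr (_ && _); [by rewrite andbC|by rewrite orbC].
rewrite !(sw w) !(sw a); exact: adj3.
Qed.
Lemma no54 (g : 'I_5 -> 'I_4) : injective g -> False.
Proof. by move/leq_card; rewrite !card_ord. Qed.

Lemma no_susp : ~ contains_copy G' (suspension (path_graph 4)).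
Proof.
case=> f [injf hf].
have hs j : suspension (path_graph 4) ord_max (lift ord_max j).
  by rewrite /suspension unlift_none liftK.
have hp (j j' : 'I_4) : path_graph 4 j j' -> suspension (path_graph 4) (lift ord_max j) (lift ord_max j').
  by rewrite /suspension !liftK.
set w := f ord_max.
pose p (j : 'I_4) := f (lift ord_max j).
pose o0 := @Ordinal 4 0 isT. pose o1 := @Ordinal 4 1 isT.
pose o2 := @Ordinal 4 2 isT. pose o3 := @Ordinal 4 3 isT.
have Ow j : G' w (p j) by apply: hf.
have A01 : G' (p o0) (p o1) by apply: hf; apply: hp.
have A12 : G' (p o1) (p o2) by apply: hf; apply: hp.
have A23 : G' (p o2) (p o3) by apply: hf; apply: hp.
have cases j : j = o0 \/ j = o1 \/ j = o2 \/ j = o3.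
  case: j => [[|[|[|[|m]]]] pj] //.
  - by left; apply: val_inj.
  - by right; left; apply: val_inj.
  - by right; right; left; apply: val_inj.
  - by right; right; right; apply: val_inj.
have all1 j : ((p j).1 == w.1) = ((p o0).1 == w.1).
  have e1 := adj3 _ _ _ (Ow o0) (Ow o1) A01.
  have e2 := adj3 _ _ _ (Ow o1) (Ow o2) A12.
  have e3 := adj3 _ _ _ (Ow o2) (Ow o3) A23.
  by case: (cases j) => [->|[->|[->|->]]]; rewrite ?e1 ?e2 ?e3.
have all2 j : ((p j).2 == w.2) = ((p o0).2 == w.2).
  have e1 := adj3' _ _ _ (Ow o0) (Ow o1) A01.
  have e2 := adj3' _ _ _ (Ow o1) (Ow o2) A12.
  have e3 := adj3' _ _ _ (Ow o2) (Ow o3) A23.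
  by case: (cases j) => [->|[->|[->|->]]]; rewrite ?e1 ?e2 ?e3.
case: (boolP ((p o0).1 == w.1)) => h.
- have H k : (f k).1 = w.1.
    case: (unliftP ord_max k) => [j ->|->] //; apply/eqP.
    by rewrite -/(p j) all1.
  apply: (@no54 (fun k => (f k).2)) => k l e; apply: injf.
  by case: (f k) (f l) e (H k) (H l) => ? ? [? ?] /= -> -> ->.
- have h2 : (p o0).2 == w.2.
    move: (Ow o0); rewrite /G' => /andP[_ /orP[|]]; first by rewrite eq_sym (negbTE h).
    by rewrite eq_sym.
  have H k : (f k).2 = w.2.
    case: (unliftP ord_max k) => [j ->|->] //; apply/eqP.
    by rewrite -/(p j) all2.
  apply: (@no54 (fun k => (f k).1)) => k l e; apply: injf.
  by case: (f k) (f l) e (H k) (H l) => ? ? [? ?] /= -> -> ->.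
Qed.
Definition L (l : bool * 'I_4) : {set V16} :=
  [set x : V16 | (if l.1 then x.1 else x.2) == l.2].
Definition D l := [set S : {set V16} | (S \subset L l) && (#|S| == 3)].

Lemma cardL l : #|L l| = 4.
Proof.
case: l => [[] k].
- have -> : L (true, k) = [set (k, i) | i : 'I_4].
    apply/setP => x; rewrite !inE /=; apply/eqP/imsetP => [<-|[i _ ->] //].
    by exists x.2 => //; case: x.
  by rewrite card_imset ?card_ord // => i j [].
- have -> : L (false, k) = [set (i, k) | i : 'I_4].
    apply/setP => x; rewrite !inE /=; apply/eqP/imsetP => [<-|[i _ ->] //].
    by exists x.1 => //; case: x.
  by rewrite card_imset ?card_ord // => i j [].
Qed.

Lemma cardD l : #|D l| = 4.
Proof. by rewrite cards_draws cardL. Qed.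

Lemma two_elems (S : {set V16}) : #|S| == 3 -> exists x y, [/\ x \in S, y \in S & x != y].
Proof.
move=> /eqP c3.
have /set0Pn [x xS] : S != set0 by rewrite -card_gt0 c3.
have : #|S :\ x| = 2 by move: c3; rewrite (cardsD1 x) xS => [[]].
move=> c2; have /set0Pn [y] : S :\ x != set0 by rewrite -card_gt0 c2.
by rewrite !inE => /andP[yx yS]; exists x, y; split; rewrite // eq_sym.
Qed.

Lemma triE : [set S : {set V16} | (#|S| == 3) &&
       [forall x in S, forall y in S, (x != y) ==> G' x y]] = \bigcup_l D l.
Proof.
apply/setP => S; rewrite !inE; apply/andP/bigcupP.
- case=> c3 /forall_inP cl.
  have G x y : x \in S -> y \in S -> x != y -> G' x y.
    by move=> xS yS; move/forall_inP: (cl x xS) => /(_ y yS) /implyP.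
  have [x [y [xS yS xy]]] := two_elems _ c3.
  have Gxy := G x y xS yS xy.
  case: (boolP (x.1 == y.1)) => h.
  + exists (true, x.1) => //; rewrite inE c3 andbT; apply/subsetP => t tS.
    rewrite inE /=; case: (eqVneq t x) => [->//|tx].
    case: (eqVneq t y) => [->|ty]; first by rewrite eq_sym.
    rewrite -(@adj3 x y t) ?(eq_sym y.1) //; apply: G => //; by rewrite eq_sym.
  + have h2 : x.2 == y.2 by move: Gxy; rewrite /G' (negbTE h) /= => /andP[].
    exists (false, x.2) => //; rewrite inE c3 andbT; apply/subsetP => t tS.
    rewrite inE /=; case: (eqVneq t x) => [->//|tx].
    case: (eqVneq t y) => [->|ty]; first by rewrite eq_sym.
    rewrite -(@adj3' x y t) ?(eq_sym y.2) //; apply: G => //; by rewrite eq_sym.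
- case=> l _; rewrite inE => /andP[sub c3]; split => //.
  apply/forall_inP => x xS; apply/forall_inP => y yS; apply/implyP => xy.
  move/subsetP: sub => sub; move: (sub x xS) (sub y yS); rewrite !inE /G' xy /=.
  by case: l.1 => /eqP-> /eqP->; rewrite eqxx ?orbT.
Qed.

Lemma triG' : triangles G' = 32.
Proof.
rewrite /triangles triE -sum1_card.
rewrite (partition_disjoint_bigcup addn (fun _ => 1)).
  under eq_bigr => l _ do rewrite sum1_card cardD.
  by rewrite sum_nat_const card_prod card_bool card_ord.
move=> [b k] [b' k'] ne; rewrite -setI_eq0; apply/set0Pn => -[S]; rewrite !inE.
move=> /andP[/andP[/subsetP s1 c3] /andP[/subsetP s2 _]].
have [x [y [xS yS xy]]] := two_elems _ c3.
move: (s1 x xS) (s1 y yS) (s2 x xS) (s2 y yS); clear s1 s2; rewrite !inE /=.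
case: b b' ne => [] [] ne; move=> /eqP h1 /eqP h2 /eqP h3 /eqP h4.
- by move: ne; rewrite -h1 -h3 eqxx.
- by move: xy; case: x y h1 h2 h3 h4 {xS yS} => ? ? [? ?] /= -> -> -> ->; rewrite eqxx.
- by move: xy; case: x y h1 h2 h3 h4 {xS yS} => ? ? [? ?] /= -> -> -> ->; rewrite eqxx.
- by move: ne; rewrite -h1 -h3 eqxx.
Qed.
Theorem mainTheorem3 :
  ~ contains_copy G16 (suspension (path_graph 4)) /\
  triangles G16 = 32 /\ 32 = 16 ^ 2 %/ 8 /\
  contains_copy G16 (complete_graph 4).
Proof.
have E : G16 = G'.
  by apply: functional_extensionality => x; apply: functional_extensionality => y; apply: G16E.
rewrite E; split; first exact: no_susp.
split; first exact: triG'.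
split; first by [].
exists (fun i => (ord0, i)); split; first by move=> i j [].
by move=> x y xy; rewrite /G' /= andbT; apply/negP => /eqP[e]; move: xy; rewrite /complete_graph e eqxx.
Qed.
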